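(* For integer $n\ge1$ and real $1\le x\le n$ define $$A_0(n,x)=n^2\left[\left(\tfrac32-\gamma\right)+\left(H_{\lfloor n/x\rfloor}-\log\frac nx\right)+\frac12\frac{x^2}{n^2}\left\lfloor\frac nx\right\rfloor^2+\frac12\frac{x^2}{n^2}\left\lfloor\frac nx\right\rfloor-2\frac xn\left\lfloor\frac nx\right\rfloor\right]$$ and $$B_0(n,x)=n^2\left[(1-\gamma)+\left(H_{\lfloor n/x\rfloor}-\log\frac nx\right)-\left\lfloor\frac nx\right\rfloor\frac xn\right].$$ Then, uniformly for $n\ge1$ and $1\le x\le n$: (1) $A_0(n,x)=nx+O(x^2)$; (2) $B_0(n,x)=\frac12 nx+O(x^2)$.
   Context: $H_m=\sum_{k=1}^m\frac1k$ and $\gamma$ is Euler's constant. *)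

(* Defs.v *)
From Stdlib Require Import Reals.
From Coquelicot Require Import Coquelicot.
Open Scope R_scope.

Fixpoint harm (m : nat) : R :=
  match m with
  | O => 0
  | S k => harm k + / INR (S k)
  end.

Definition euler_gamma : R := real (Lim_seq (fun m => harm m - ln (INR m))).

(* floor of a real, as an integer; Int_part r = up r - 1 is the floor *)
Definition floorZ (r : R) : Z := Int_part r.

(* floor(n/x) as a natural number (n/x >= 1 in the range of interest) *)
Definition q (n : nat) (x : R) : nat := Z.to_nat (floorZ (INR n / x)).

Definition A0 (n : nat) (x : R) : R :=
  let N := INR n in let Q := INR (q n x) in
  N ^ 2 * ((3/2 - euler_gamma) + (harm (q n x) - ln (N / x))
           + 1/2 * (x ^ 2 / N ^ 2) * Q ^ 2 + 1/2 * (x ^ 2 / N ^ 2) * Q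
           - 2 * (x / N) * Q).

Definition B0 (n : nat) (x : R) : R :=
  let N := INR n in let Q := INR (q n x) in
  N ^ 2 * ((1 - euler_gamma) + (harm (q n x) - ln (N / x)) - Q * (x / N)).

(* Main.v *)
Require Import Defs.
From Stdlib Require Import Reals Lra Lia Psatz ZArith.
From Coquelicot Require Import Coquelicot.
Open Scope R_scope.

Lemma f3_bound t : 0 < t <= 1 ->
  - t^3/2 <= ln (1+t) - t*(2+t)/(2*(1+t)) <= 0.
Proof.
  intros Ht.
  destruct (MVT_cor2 (fun u => ln (1+u) - u*(2+u)/(2*(1+u)))
     (fun u => - u^2/(2*(1+u)^2)) 0 t) as [c [Hc1 Hc2]]; [lra| |].
  { intros c Hc. apply is_derive_Reals. auto_derive.
    - lra.
    - field. lra. }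
  replace (ln (1 + 0) - 0 * (2 + 0) / (2 * (1 + 0))) with 0 in Hc1
    by (rewrite Rplus_0_r, ln_1; field).
  rewrite Rminus_0_r in Hc1.
  assert (H1 : 0 <= c^2/(2*(1+c)^2) <= t^2/2).
  { split. apply Rmult_le_pos. nra. left; apply Rinv_0_lt_compat; nra.
    apply Rmult_le_reg_r with (2*(1+c)^2). nra.
    unfold Rdiv. rewrite Rmult_assoc, Rinv_l by nra. nra. }
  split; rewrite Hc1; unfold Rdiv in *; nra.
Qed.

Lemma ln1_bound s : 0 <= s < 1 -> - s^2 <= ln (1+s) - s <= 0.
Proof.
  intros Hs. destruct (Req_dec s 0) as [->|Hs0].
  { rewrite Rplus_0_r, ln_1. lra. }
  destruct (MVT_cor2 (fun u => ln (1+u) - u) (fun u => - u/(1+u)) 0 s) as [c [Hc1 Hc2]]; [lra| |].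
  { intros c Hc. apply is_derive_Reals. auto_derive.
    - lra.
    - field. lra. }
  rewrite Rplus_0_r, ln_1, !Rminus_0_r in Hc1.
  assert (H1 : 0 <= c/(1+c) <= s).
  { split. apply Rmult_le_pos. lra. left; apply Rinv_0_lt_compat; lra.
    apply Rmult_le_reg_r with (1+c). lra.
    unfold Rdiv. rewrite Rmult_assoc, Rinv_l by lra. nra. }
  split; rewrite Hc1; unfold Rdiv in *; nra.
Qed.

Definition dd (m : nat) : R := harm m - ln (INR m) - / (2 * INR m).

Lemma dd_step m : (1 <= m)%nat ->
  0 <= dd (S m) - dd m <= 2 * (/ INR m ^ 2 - / INR (S m) ^ 2).
Proof.
  intros Hm. assert (HM : 1 <= INR m) by (apply (le_INR 1); lia).
  set (M := INR m) in *.
  assert (HS : INR (S m) = M + 1) by (rewrite S_INR; reflexivity).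
  assert (Hln : ln (INR (S m)) = ln M + ln (1 + / M)).
  { assert (0 < /M) by (apply Rinv_0_lt_compat; lra).
    rewrite <- ln_mult by lra.
    f_equal. rewrite HS. field. lra. }
  assert (E : dd (S m) - dd m = - (ln (1 + /M) - /M * (2 + /M) / (2 * (1 + /M)))).
  { unfold dd. cbn [harm]. rewrite Hln. fold M. rewrite HS. field. split; lra. }
  assert (Ht : 0 < /M <= 1).
  { split. apply Rinv_0_lt_compat; lra. rewrite <- Rinv_1. apply Rinv_le_contravar; lra. }
  pose proof (f3_bound _ Ht) as Hf.
  rewrite E, HS. split. lra.
  assert (Hk : (/M)^3/2 <= 2 * (/ M ^ 2 - / (M+1) ^ 2)).
  { replace ((/M)^3/2) with (/ (2*M^3)) by (field; lra).
    replace (2 * (/ M ^ 2 - / (M+1) ^ 2)) with (2*(2*M+1)/(M^2*(M+1)^2)) by (field; lra).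
    apply Rmult_le_reg_r with (2*M^3). nra.
    rewrite Rinv_l by nra.
    unfold Rdiv. 
    replace (2 * (2 * M + 1) * / (M ^ 2 * (M + 1) ^ 2) * (2 * M ^ 3))
      with (4*M*(2*M+1) / ((M+1)^2)) by (field; lra).
    apply Rmult_le_reg_r with ((M+1)^2). nra.
    unfold Rdiv. rewrite Rmult_assoc, Rinv_l by nra. nra. }
  lra.
Qed.

Lemma incr_le (u : nat -> R) : (forall n, u n <= u (S n)) -> forall j n, u j <= u (n + j)%nat.
Proof. intros H j n. induction n. simpl; lra. simpl. specialize (H (n+j)%nat). lra. Qed.

Lemma inv_sq_lim : is_lim_seq (fun k => 2 * (/ INR (S k) ^ 2)) 0.
Proof.
  assert (H : is_lim_seq (fun n => / INR n) 0).
  { replace (Finite 0) with (Rbar_inv p_infty) by reflexivity.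
    apply is_lim_seq_inv. apply is_lim_seq_INR. discriminate. }
  apply is_lim_seq_incr_1 in H.
  replace 0 with (2 * (0 * 0)) by ring.
  apply is_lim_seq_ext with (fun k => 2 * ((/ INR (S k)) * (/ INR (S k)))).
  { intros k. field. apply not_0_INR; lia. }
  apply is_lim_seq_mult'. apply is_lim_seq_const. apply is_lim_seq_mult'; assumption.
Qed.

Lemma gamma_asym m : (1 <= m)%nat ->
  Rabs (harm m - ln (INR m) - euler_gamma - / (2 * INR m)) <= 2 / INR m ^ 2.
Proof.
  intros Hm.
  set (D := fun k => dd (S k)).
  set (v := fun k => D k + 2 * (/ INR (S k) ^ 2)).
  assert (HD : forall n, D n <= D (S n)).
  { intros n. unfold D. pose proof (dd_step (S n) ltac:(lia)). lra. }
  assert (Hv : forall n, v (S n) <= v n).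
  { intros n. unfold v, D. pose proof (dd_step (S n) ltac:(lia)). lra. }
  assert (Hvn : forall j n, v (n + j)%nat <= v j).
  { intros j n. pose proof (incr_le (fun k => - v k) (fun k => Ropp_le_contravar _ _ (Hv k)) j n).
    simpl in H. lra. }
  assert (Hb : forall n, D n <= v 0%nat).
  { intros n. pose proof (Hvn 0%nat n). rewrite Nat.add_0_r in H. unfold v in H |- *.
    assert (0 <= 2 * (/ INR (S n) ^ 2)).
    { apply Rmult_le_pos. lra. left; apply Rinv_0_lt_compat, pow_lt, lt_0_INR; lia. }
    lra. }
  destruct (ex_finite_lim_seq_incr D (v 0%nat) HD Hb) as [l Hl].
  assert (Hvl : is_lim_seq v l).
  { unfold v. replace l with (l + 0) by ring. apply is_lim_seq_plus'. exact Hl. exact inv_sq_lim. }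
  assert (Hg : euler_gamma = l).
  { unfold euler_gamma.
    assert (Hinv : is_lim_seq (fun k => / (2 * INR (S k))) 0).
    { apply is_lim_seq_ext with (fun k => /2 * (/ INR (S k))).
      intros k. rewrite Rinv_mult. reflexivity.
      replace 0 with (/2 * 0) by ring. apply is_lim_seq_mult'. apply is_lim_seq_const.
      apply (is_lim_seq_incr_1 (fun n => / INR n)).
      replace (Finite 0) with (Rbar_inv p_infty) by reflexivity.
      apply is_lim_seq_inv. apply is_lim_seq_INR. discriminate. }
    assert (Hh : is_lim_seq (fun m => harm m - ln (INR m)) l).
    { apply is_lim_seq_incr_1.
      apply is_lim_seq_ext with (fun k => D k + / (2 * INR (S k))).
      intros k. unfold D, dd. ring.
      replace l with (l + 0) by ring. apply is_lim_seq_plus'; assumption. }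
    rewrite (is_lim_seq_unique _ _ Hh). reflexivity. }
  destruct m as [|j]. lia.
  assert (H1 : D j <= l).
  { apply (is_lim_seq_incr_n D j) in Hl.
    pose proof (is_lim_seq_le (fun _ => D j) (fun n => D (n + j)%nat) (D j) l
      (incr_le D HD j) (is_lim_seq_const _) Hl). simpl in H. exact H. }
  assert (H2 : l <= v j).
  { apply (is_lim_seq_incr_n v j) in Hvl.
    pose proof (is_lim_seq_le (fun n => v (n + j)%nat) (fun _ => v j) l (v j)
      (Hvn j) Hvl (is_lim_seq_const _)). simpl in H. exact H. }
  rewrite Hg. unfold v, D, dd in *.
  apply Rabs_le. unfold Rdiv. lra.
Qed.

Lemma q_facts n x : (1 <= n)%nat -> 1 <= x <= INR n ->
  (1 <= q n x)%nat /\ INR (q n x) <= INR n / x < INR (q n x) + 1.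
Proof.
  intros Hn Hx.
  assert (Hr : 1 <= INR n / x).
  { apply Rmult_le_reg_r with x. lra. unfold Rdiv. rewrite Rmult_assoc, Rinv_l by lra. lra. }
  destruct (base_Int_part (INR n / x)) as [H1 H2].
  unfold q, floorZ.
  set (f := Int_part (INR n / x)) in *.
  assert (Hf : (1 <= f)%Z).
  { assert (0 < IZR f) by lra. apply lt_IZR in H. lia. }
  rewrite INR_IZR_INZ, Z2Nat.id by lia.
  split. apply (Nat2Z.inj_le 1). rewrite Z2Nat.id by lia. lia.
  lra.
Qed.

Lemma sq_bound (r Q e : R) : 1 <= Q -> Q <= r <= 2 * Q -> Rabs e <= 2 / Q^2 ->
  r^2 * Rabs e <= 8.
Proof.
  intros HQ Hr He.
  assert (H1 : Rabs e * Q^2 <= 2).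
  { apply Rmult_le_compat_r with (r := Q^2) in He. 2: nra.
    unfold Rdiv in He. rewrite Rmult_assoc, Rinv_l in He by nra. lra. }
  assert (0 <= Rabs e) by apply Rabs_pos.
  assert (r^2 <= 4 * Q^2) by nra.
  nra.
Qed.

Lemma main_common n x : (1 <= n)%nat -> 1 <= x <= INR n ->
  exists Q th e L, 1 <= Q /\ 0 <= th < 1 /\ INR n = (Q + th) * x /\
    INR (q n x) = Q /\
    harm (q n x) - ln (INR n / x) = e + euler_gamma + /(2*Q) - L - th/Q /\
    Rabs e <= 2 / Q^2 /\ - (th/Q)^2 <= L <= 0.
Proof.
  intros Hn Hx. destruct (q_facts n x Hn Hx) as [Hq [Hr1 Hr2]].
  set (Q := INR (q n x)) in *.
  assert (HQ : 1 <= Q) by (apply (le_INR 1); exact Hq).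
  set (th := INR n / x - Q).
  pose proof (gamma_asym _ Hq) as Hg. fold Q in Hg.
  exists Q, th, (harm (q n x) - ln Q - euler_gamma - / (2 * Q)), (ln (1 + th/Q) - th/Q).
  assert (Hs : 0 <= th/Q < 1).
  { split. apply Rmult_le_pos. unfold th; lra. left; apply Rinv_0_lt_compat; lra.
    apply Rmult_lt_reg_r with Q. lra. unfold Rdiv. rewrite Rmult_assoc, Rinv_l by lra. unfold th; lra. }
  pose proof (ln1_bound _ Hs).
  split. lra. split. unfold th; lra. split. unfold th. field. lra.
  split. reflexivity.
  split.
  { replace (INR n / x) with (Q * (1 + th/Q)) by (unfold th; field; lra).
    rewrite ln_mult by lra. ring. }
  split. exact Hg. lra.
Qed.

Lemma fin_bound x r e L T K : r^2 * Rabs e <= 8 -> Rabs (r^2 * L) <= 4 -> Rabs T <= K ->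
  Rabs (x^2 * (r^2 * (e - L) + T)) <= (12 + K) * x^2.
Proof.
  intros H1 H2 H3. rewrite Rabs_mult, (Rabs_right (x^2)) by (apply Rle_ge; nra).
  rewrite Rmult_comm. apply Rmult_le_compat_r. nra.
  replace (r^2*(e-L)+T) with (r^2*e + (- (r^2*L)) + T) by ring.
  eapply Rle_trans. apply Rabs_triang.
  eapply Rle_trans. apply Rplus_le_compat_r. apply Rabs_triang.
  rewrite Rabs_Ropp, Rabs_mult, (Rabs_right (r^2)) by (apply Rle_ge; nra). lra.
Qed.

Lemma L_bound Q th L : 1 <= Q -> 0 <= th < 1 -> - (th/Q)^2 <= L <= 0 ->
  Rabs ((Q+th)^2 * L) <= 4.
Proof.
  intros HQ Hth HL. set (u := /Q).
  assert (Hu : 0 < u <= 1). { split. apply Rinv_0_lt_compat; lra. unfold u; rewrite <- Rinv_1. apply Rinv_le_contravar; lra. }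
  assert (HQu : Q * u = 1) by (unfold u; field; lra).
  replace (th/Q) with (th*u) in HL by reflexivity.
  assert (E : (Q+th)*(th*u) = th*(Q*u) + th^2*u) by ring. rewrite HQu in E.
  assert (Hrs : 0 <= (Q+th)*(th*u) <= 2) by (rewrite E; nra).
  assert (Hq : (Q+th)^2*(th*u)^2 <= 4).
  { replace ((Q+th)^2*(th*u)^2) with (((Q+th)*(th*u))^2) by ring. nra. }
  assert (0 <= (Q+th)^2) by nra.
  assert (0 <= (Q+th)^2 * (L + (th*u)^2)) by (apply Rmult_le_pos; lra).
  assert ((Q+th)^2 * L <= 0) by (apply Rmult_le_0_l; lra).
  apply Rabs_le. split; nra.
Qed.

Theorem theorem3p7 :
  (exists C : R, forall (n : nat) (x : R), (1 <= n)%nat -> 1 <= x <= INR n ->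
      Rabs (A0 n x - INR n * x) <= C * x ^ 2) /\
  (exists C : R, forall (n : nat) (x : R), (1 <= n)%nat -> 1 <= x <= INR n ->
      Rabs (B0 n x - 1/2 * INR n * x) <= C * x ^ 2).
Proof.
  split.
  - exists 14. intros n x Hn Hx.
    destruct (main_common n x Hn Hx) as (Q & th & e & L & HQ & Hth & HN & Hq & Hh & He & HL).
    unfold A0. cbv zeta. rewrite Hh, Hq, HN.
    set (u := /Q).
    assert (Hu : 0 < u <= 1). { split. apply Rinv_0_lt_compat; lra. unfold u; rewrite <- Rinv_1. apply Rinv_le_contravar; lra. }
    replace (((Q + th) * x) ^ 2 *
   (3 / 2 - euler_gamma + (e + euler_gamma + / (2 * Q) - L - th / Q) +
    1 / 2 * (x ^ 2 / ((Q + th) * x) ^ 2) * Q ^ 2 +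
    1 / 2 * (x ^ 2 / ((Q + th) * x) ^ 2) * Q - 2 * (x / ((Q + th) * x)) * Q) -
  (Q + th) * x * x) with
     (x^2 * ((Q+th)^2 * (e - L) + (- th^2 + th^2*u - 2*th^3*u)/2))
     by (unfold u; field; repeat split; lra).
    replace 14 with (12+2) by ring. apply (fin_bound x (Q+th) e L _ 2).
    + apply (sq_bound _ Q); lra.
    + apply L_bound; lra.
    + assert (0 <= th^2 <= 1) by nra.
      assert (0 <= th^2*u <= 1) by nra.
      assert (0 <= th^3*u <= 1) by (replace (th^3*u) with (th*(th^2*u)) by ring; nra).
      apply Rabs_le. split; nra.
  - exists 13. intros n x Hn Hx.
    destruct (main_common n x Hn Hx) as (Q & th & e & L & HQ & Hth & HN & Hq & Hh & He & HL).
    unfold B0. cbv zeta. rewrite Hh, Hq, HN.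
    set (u := /Q).
    assert (Hu : 0 < u <= 1). { split. apply Rinv_0_lt_compat; lra. unfold u; rewrite <- Rinv_1. apply Rinv_le_contravar; lra. }
    replace (((Q + th) * x) ^ 2 *
   (1 - euler_gamma + (e + euler_gamma + / (2 * Q) - L - th / Q) -
    Q * (x / ((Q + th) * x))) - 1 / 2 * ((Q + th) * x) * x) with
     (x^2 * ((Q+th)^2 * (e - L) + (th*(1-2*th) + th^2*(1-2*th)*u)/2))
     by (unfold u; field; repeat split; lra).
    replace 13 with (12+1) by ring. apply (fin_bound x (Q+th) e L _ 1).
    + apply (sq_bound _ Q); lra.
    + apply L_bound; lra.
    + assert (0 <= th^2 <= 1) by nra.
      assert (0 <= th^2*u <= 1) by nra.
      assert (0 <= th^3*u <= 1) by (replace (th^3*u) with (th*(th^2*u)) by ring; nra).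
      apply Rabs_le. split; nra.
Qed.
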